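(* Let $m,n\in\mathbb{P}$ and let $K_n=[n]\oplus([1]\sqcup[1])\oplus[n]$. For the poset $[m]\times K_n$ the following are equivalent: (a) $[m]\times K_n$ has a unique rank level of maximal size; (b) $m=1$ or $m=2n+1$; (c) $\mathcal{N}_{[m]\times K_n}$ is monic; (d) $\mathcal{N}_{[m]\times K_n}$ is palindromic.
   Context: $[k]=\{1<\cdots<k\}$ is a chain; $\oplus$ is the ordinal sum (every element of the first summand is below every element of the second), and $[1]\sqcup[1]$ is a two-element antichain. So $K_n$ consists of a chain $1<\cdots<n$, then two incomparable elements, then a chain of $n$ elements, with everything in a lower part below everything in a higher part. $[m]\times K_n$ has the product order; it is graded (all maximal chains have equal length, rank of minimal element $1$, rank increases by one along covers) and its rank levels are the sets of elements of equal rank. $\mathcal{N}_P(t)=\sum_A t^{|A|}$ over all antichains $A$ (including $\emptyset$). A polynomial $\sum_{k=0}^d a_kt^k$ with $a_d\neq0$ is monic if $a_d=1$ and palindromic if $a_k=a_{d-k}$ for all $k$. *)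

(* Defs.v *)
From HB Require Import structures.
From mathcomp Require Import all_boot all_order all_algebra.
Set Implicit Arguments. Unset Strict Implicit. Unset Printing Implicit Defensive.
Import GRing.Theory.
Local Open Scope ring_scope.

Section Posets.
Variables (T : finType) (le : rel T).

Definition plt (x y : T) : bool := le x y && (x != y).

Definition covers (x y : T) : bool :=
  plt x y && [forall z : T, ~~ (plt x z && plt z y)].

Definition minimal (x : T) : bool := [forall y : T, le y x ==> (y == x)].

Definition rank_function (r : T -> nat) : Prop :=
  (forall x, minimal x -> r x = 1%N) /\
  (forall x y, covers x y -> r y = (r x).+1).

Definition rank_level (r : T -> nat) (k : nat) : {set T} :=
  [set x | r x == k].

Definition unique_max_rank_level : Prop :=
  exists r, rank_function r /\
    exists k : nat, forall j : nat, j != k ->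
      (#|rank_level r j| < #|rank_level r k|)%N.

Definition antichain (A : {set T}) : bool :=
  [forall x in A, forall y in A, le x y ==> (x == y)].

Definition antichain_poly : {poly int} :=
  \sum_(A : {set T} | antichain A) 'X^#|A|.

End Posets.

Definition palindromic (p : {poly int}) : Prop :=
  forall k : nat, (k <= (size p).-1)%N -> p`_k = p`_((size p).-1 - k).

Definition chain_le (m : nat) : rel 'I_m := fun i j => (i <= j)%N.

(* K_n = [n] (+) ([1] |_| [1]) (+) [n], on 'I_(2n+2):
   0..n-1 lower chain, n and n+1 the antichain, n+2..2n+1 upper chain.
   Kn_lvl gives the position in the ordinal sum; x <= y iff x = y or
   x is in a strictly lower position. *)
Definition Kn_lvl (n : nat) (x : 'I_(n.*2.+2)) : nat :=
  if (x <= n)%N then val x else (val x).-1.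

Definition Kn_le (n : nat) : rel 'I_(n.*2.+2) :=
  fun x y => (x == y) || (Kn_lvl x < Kn_lvl y)%N.

Definition mKn_le (m n : nat) : rel ('I_m * 'I_(n.*2.+2)) :=
  fun p q => chain_le p.1 q.1 && Kn_le p.2 q.2.
Arguments mKn_le m n : clear implicits.
Arguments Kn_le n : clear implicits.
Arguments Kn_lvl n : clear implicits.
Arguments chain_le m : clear implicits.

(* Main.v *)
Require Import Defs.
From mathcomp Require Import all_boot all_order all_algebra zify ring.
Set Implicit Arguments. Unset Strict Implicit. Unset Printing Implicit Defensive.
Import GRing.Theory.

Section Col.
Variables (M n : nat).
Local Notation Q := ('I_(n.*2.+2)).
Local Notation T := ('I_M * 'I_(n.*2.+2))%type.
Local Notation le := (mKn_le M n).
Local Notation leK := (Kn_le n).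
Local Notation lv := (Kn_lvl n).

Definition okA (m : nat) (S : {set Q}) (A : {set T}) : bool :=
  antichain le A && [forall p in A, (p.1 < m)%N && (p.2 \in S)].

Definition FF (m : nat) (S : {set Q}) : {poly int} :=
  (\sum_(A : {set T} | okA m S A) 'X^#|A|)%R.

Definition downK (C : {set Q}) : {set Q} := [set y | [exists x in C, leK y x]].

Lemma leK_refl x : leK x x.
Proof. by rewrite /Kn_le eqxx. Qed.

Lemma col_lemma m (hm : (m < M)%N) S :
  FF m.+1 S = (\sum_(C : {set Q} | (C \subset S) && antichain leK C)
                'X^#|C| * FF m (S :\: downK C))%R.
Proof.
pose mo := Ordinal hm.
rewrite /FF (partition_big (fun A : {set T} => [set x | (mo, x) \in A])
   (fun C => (C \subset S) && antichain leK C)); last first.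
  move=> A /andP[aA /forall_inP oA]; apply/andP; split.
    apply/subsetP => x; rewrite inE => /oA; by case/andP.
  apply/forallP => x; apply/implyP; rewrite inE => xA.
  apply/forallP => y; apply/implyP; rewrite inE => yA.
  apply/implyP => lxy.
  move/forallP: aA => /(_ (mo, x)); rewrite xA /= => /forallP /(_ (mo, y)).
  rewrite yA /= /mKn_le /chain_le /= leqnn lxy /= => /eqP [] ->; done.
apply eq_bigr => C /andP[CS aC]; rewrite big_distrr /=.
rewrite (reindex_onto (fun A' : {set T} => A' :|: [set (mo, x) | x in C])
            (fun A : {set T} => [set p in A | (p.1 < m)%N])); last first.
  move=> A /andP[/andP[aA /forall_inP oA] /eqP cA].
  apply/setP => p; rewrite !inE.
  case pA: (p \in A).
    have /andP[p1 _] := oA p pA.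
    case: ltnP => //= pm.
    have pe : p.1 = mo by apply: val_inj => /=; apply/eqP; rewrite eqn_leq pm -ltnS p1.
    apply/imsetP; exists p.2; last by rewrite -pe; case: p {p1 pm pe pA}.
    by rewrite -cA inE -pe; case: p pA {p1 pm pe}.
  apply/negP => /imsetP [x]; rewrite -cA inE => xA pe.
  by rewrite pe xA in pA.
have memC : forall p : T, (p \in [set (mo, x) | x in C]) = (p.1 == mo) && (p.2 \in C).
  move=> [p1 p2]; apply/imsetP/andP => /=.
    by case=> x xC [-> ->].
  by case=> /eqP -> ?; exists p2.
have key : forall A' : {set T},
  okA m.+1 S (A' :|: [set (mo, x) | x in C]) &&
  ([set x | (mo, x) \in A' :|: [set (mo, x0) | x0 in C]] == C) &&
  ([set p in A' :|: [set (mo, x) | x in C] | (p.1 < m)%N] == A') =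
  okA m (S :\: downK C) A'.
  move=> A'; apply/idP/idP.
    case/andP=> [/andP[/andP[aU /forall_inP oU] _] /eqP rA].
    have A'm : forall p, p \in A' -> (p.1 < m)%N.
      by move=> p; rewrite -rA inE; case/andP.
    have A'U : forall p, p \in A' -> p \in A' :|: [set (mo, x) | x in C].
      by move=> p pA; rewrite inE pA.
    apply/andP; split.
      apply/forall_inP => p pA; apply/forall_inP => q qA.
      by move/forall_inP: aU => /(_ p (A'U p pA)) /forall_inP /(_ q (A'U q qA)).
    apply/forall_inP => p pA; rewrite A'm //= !inE.
    have /andP[_ ->] := oU p (A'U p pA); rewrite andbT.
    apply/negP => /existsP [x /andP[xC lpx]].
    have xU : (mo, x) \in A' :|: [set (mo, x) | x in C] by rewrite inE memC /= eqxx xC orbT.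
    move/forall_inP: aU => /(_ p (A'U p pA)) /forall_inP /(_ _ xU).
    rewrite /mKn_le /chain_le /= lpx andbT ltnW ?A'm //= => /eqP pe.
    by have := A'm p pA; rewrite pe /= ltnn.
  case/andP=> aA /forall_inP oA.
  have A'm : forall p, p \in A' -> (p.1 < m)%N by move=> p /oA /andP[].
  have A'S : forall p, p \in A' -> (p.2 \in S) && ~~ (p.2 \in downK C).
    by move=> p /oA /andP[_]; rewrite !inE andbC.
  have A'mo : forall p, p \in A' -> p.1 != mo.
    by move=> p /A'm pm; apply/negP => /eqP pe; rewrite pe /= ltnn in pm.
  apply/andP; split; [apply/andP; split|].
  - apply/andP; split.
      apply/forall_inP => p; rewrite inE memC => pU.
      apply/forall_inP => q; rewrite inE memC => qU.
      apply/implyP; rewrite /mKn_le /chain_le => /andP[l1 l2].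
      case/orP: pU => [pA|/andP[/eqP p1 p2]]; case/orP: qU => [qA|/andP[/eqP q1 q2]].
      + by move/forall_inP: aA => /(_ p pA) /forall_inP /(_ q qA); rewrite /mKn_le /chain_le l1 l2.
      + case/andP: (A'S p pA) => _ /negP H; exfalso; apply: H.
        by rewrite inE; apply/existsP; exists q.2; rewrite q2 l2.
      + by have := leq_ltn_trans l1 (A'm q qA); rewrite p1 /= ltnn.
      + move/forall_inP: aC => /(_ p.2 p2) /forall_inP /(_ q.2 q2) /implyP /(_ l2) /eqP e.
        by case: p q p1 q1 {l1 l2 p2 q2} e => [p1' p2'] [q1' q2'] /= -> -> ->.
    apply/forall_inP => p; rewrite inE memC => /orP [pA|/andP[/eqP p1 p2]].
      by case/andP: (A'S p pA) => -> _; rewrite ltnS ltnW ?A'm.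
    by rewrite p1 /= ltnSn (subsetP CS).
  - apply/eqP/setP => x; rewrite !inE memC /= eqxx /=.
    by case xA: ((mo, x) \in A') => //; have := A'mo _ xA; rewrite eqxx.
  - apply/eqP/setP => p; rewrite !inE memC.
    case pA: (p \in A'); first by rewrite A'm.
    by rewrite /=; case: eqP => //= ->; rewrite /= ?ltnn ?andbF.
apply: eq_big => [A'|A']; first exact: key.
rewrite key => /andP[_ /forall_inP oA].
rewrite cardsU.
have -> : A' :&: [set (mo, x) | x in C] = set0.
  apply/setP => p; rewrite !inE memC; apply/negP => /and3P[pA /eqP pe _].
  by have /andP[] := oA p pA; rewrite pe /= ltnn.
rewrite cards0 subn0 card_imset; last by move=> x y [].
by rewrite -exprD addnC.
Qed.

Lemma lvE (x : Q) : lv x = if (nat_of_ord x <= n)%N then nat_of_ord x else (nat_of_ord x).-1.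
Proof. by []. Qed.

Lemma lv_lt (x : Q) : (lv x < n.*2.+1)%N.
Proof. rewrite lvE; have := ltn_ord x; case: (leqP x n); lia. Qed.

Lemma lv_eq (x y : Q) : lv x = lv y -> x != y -> lv x = n.
Proof.
rewrite !lvE => e ne; have : nat_of_ord x != nat_of_ord y by [].
move: e; case: (leqP x n) => hx; case: (leqP y n) => hy; lia.
Qed.

Lemma lvn_val (z : Q) : lv z = n -> (nat_of_ord z = n) \/ (nat_of_ord z = n.+1).
Proof. rewrite lvE; case: (leqP z n) => h e; lia. Qed.

Lemma lvn_cases (x y z : Q) : lv x = n -> lv y = n -> lv z = n -> x != y -> (z == x) || (z == y).
Proof.
move=> /lvn_val ex /lvn_val ey /lvn_val ez ne.
have vx : forall u v : Q, nat_of_ord u = nat_of_ord v -> u == v by move=> u v e; apply/eqP/val_inj.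
case: ex => ex; case: ey => ey; case: ez => ez.
all: try by rewrite vx //; rewrite ?ex ?ey ?ez.
all: try by rewrite (vx z y) ?orbT //; rewrite ?ex ?ey ?ez.
all: by move: ne; rewrite vx //; rewrite ?ex ?ey ?ez.
Qed.

Lemma na : (n < n.*2.+2)%N. Proof. lia. Qed.
Lemma nb : (n.+1 < n.*2.+2)%N. Proof. lia. Qed.
Definition ka : Q := Ordinal na.
Definition kb : Q := Ordinal nb.
Lemma lv_ka : lv ka = n. Proof. by rewrite /Kn_lvl /= leqnn. Qed.
Lemma lv_kb : lv kb = n. Proof. by rewrite /Kn_lvl /= ltnn. Qed.
Lemma ka_kb : ka != kb. Proof. by apply/eqP => /(congr1 val) /= /eqP; rewrite eqn_leq ltnn andbF. Qed.

Lemma lvn (z : Q) : lv z = n -> (z == ka) || (z == kb).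
Proof. move=> ez; exact: lvn_cases lv_ka lv_kb ez ka_kb. Qed.

Lemma antichainK2 (C : {set Q}) : antichain leK C -> (1 < #|C|)%N -> C = [set ka; kb].
Proof.
move=> aC c2.
have [x [y [xC yC nxy]]] : exists x y, [/\ x \in C, y \in C & x != y].
  have /card_gt0P [x xC] : (0 < #|C|)%N by apply: ltnW.
  have : (0 < #|C :\ x|)%N by rewrite (cardsD1 x C) xC add1n ltnS in c2.
  case/card_gt0P => y; rewrite !inE => /andP[yx yC]; exists x, y; split=> //; by rewrite eq_sym.
have inc : forall u v, u \in C -> v \in C -> u != v -> lv u = lv v.
  move=> u v uC vC nuv.
  move/forall_inP: aC => aC.
  have h1 := aC u uC; have h2 := aC v vC.
  move/forall_inP: h1 => /(_ v vC); move/forall_inP: h2 => /(_ u uC).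
  rewrite /Kn_le (negbTE nuv) eq_sym (negbTE nuv) /= => h2 h1.
  apply/eqP; rewrite eqn_leq; apply/andP; split; rewrite leqNgt; apply/negP => h.
    by move: h2; rewrite h. by move: h1; rewrite h.
have ex : lv x = n by apply: lv_eq (inc x y xC yC nxy) nxy.
have ey : lv y = n by rewrite -(inc x y xC yC nxy).
have sub : C \subset [set ka; kb].
  apply/subsetP => z zC; rewrite !inE; apply: lvn.
  case: (eqVneq z x) => [->//|nzx]; by rewrite (inc z x zC xC nzx).
apply/eqP; rewrite eqEcard sub /= cards2 ka_kb.
exact: c2.
Qed.

Lemma antichain1 (x : Q) : antichain leK [set x].
Proof.
apply/forall_inP => u; rewrite inE => /eqP ->; apply/forall_inP => v; rewrite inE => /eqP ->.
by rewrite eqxx implybT.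
Qed.

Lemma antichain0 : antichain leK set0.
Proof. by apply/forall_inP => u; rewrite inE. Qed.

Lemma antichain_ab : antichain leK [set ka; kb].
Proof.
apply/forall_inP => u uab; apply/forall_inP => v vab; apply/implyP; rewrite /Kn_le.
have lu : lv u = n by case/set2P: uab => ->; rewrite ?lv_ka ?lv_kb.
have lvv : lv v = n by case/set2P: vab => ->; rewrite ?lv_ka ?lv_kb.
by rewrite lu lvv ltnn orbF.
Qed.

Lemma sumC (f : {set Q} -> {poly int}) (S : {set Q}) :
  (\sum_(C : {set Q} | (C \subset S) && antichain leK C) f C =
   f set0 + \sum_(x in S) f [set x] +
   (if (ka \in S) && (kb \in S) then f [set ka; kb] else 0))%R.
Proof.
rewrite (bigD1 set0) /=; last by rewrite sub0set antichain0.
rewrite (bigID (fun C : {set Q} => #|C| == 1%N)) /= -addrA; congr (_ + (_ + _))%R.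
  rewrite -(big_imset _ (h := fun x : Q => [set x])) /=; last by move=> x y _ _; apply: set1_inj.
  apply: eq_bigl => C; apply/idP/idP.
    case/andP=> [/andP[/andP[CS aC] _] /cards1P [x Cx]].
    apply/imsetP; exists x => //; by move: CS; rewrite Cx sub1set.
  case/imsetP => x xS ->; rewrite sub1set xS antichain1 cards1 eqxx andbT /=.
  by apply/eqP => /setP /(_ x); rewrite !inE eqxx.
case: ifP => hab.
  rewrite (eq_bigl (fun C => C == [set ka; kb])) ?big_pred1_eq // => C.
  apply/idP/idP.
    case/andP=> [/andP[/andP[CS aC] C0] C1]; apply/eqP; apply: antichainK2 aC _.
    rewrite ltn_neqAle eq_sym C1 /= lt0n cards_eq0; exact: C0.
  move/eqP ->; rewrite antichain_ab cards2 ka_kb /= andbT.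
  case/andP: hab => ha hb; rewrite andbT; apply/andP; split.
    by apply/subsetP => z /set2P [] ->.
  by apply/eqP => /setP /(_ ka); rewrite !inE eqxx.
rewrite big_pred0 // => C; apply/negP => /andP[/andP[/andP[CS aC] C0] C1].
have e : C = [set ka; kb].
  apply: antichainK2 aC _; rewrite ltn_neqAle eq_sym C1 /= lt0n cards_eq0; exact: C0.
move: CS; rewrite e => /subsetP sub; move: hab.
by rewrite !sub // !inE eqxx ?orbT.
Qed.

Lemma downK0 : downK set0 = set0.
Proof. by apply/setP => y; rewrite !inE; apply/existsP => [[x]]; rewrite inE. Qed.

Lemma downK1 (x : Q) : downK [set x] = [set y | leK y x].
Proof.
apply/setP => y; rewrite !inE; apply/existsP/idP => [[z /andP[]]|h].
  by rewrite inE => /eqP ->.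
by exists x; rewrite inE eqxx.
Qed.

Lemma downK2 : downK [set ka; kb] = [set y | leK y ka || leK y kb].
Proof.
apply/setP => y; rewrite !inE; apply/existsP/idP => [[z /andP[]]|h].
  by case/set2P => -> ->; rewrite ?orbT.
by case/orP: h => h; [exists ka | exists kb]; rewrite !inE eqxx ?orbT.
Qed.

Lemma FF_rec m (hm : (m < M)%N) S :
  FF m.+1 S = (FF m S + \sum_(x in S) 'X * FF m (S :\: [set y | leK y x]) +
     (if (ka \in S) && (kb \in S) then 'X^2 * FF m (S :\: [set y | leK y ka || leK y kb]) else 0))%R.
Proof.
rewrite col_lemma // sumC cards0 expr0 mul1r downK0 setD0.
congr (_ + _ + _)%R.
  by apply: eq_bigr => x _; rewrite cards1 expr1 downK1.
by rewrite cards2 ka_kb downK2.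
Qed.

End Col.

Local Open Scope ring_scope.

Definition Ch (L m : nat) : {poly int} := \poly_(k < L.+1) (('C(L, k) * 'C(m, k))%N%:R).
Definition Sc (L m : nat) : {poly int} := \sum_(j < L) Ch j m.
Definition Phi (D m : nat) : {poly int} :=
  2%:R * (Ch D.+1 m - Ch D m) + Ch D.-1 m + 'X * (Ch D m - Ch D.-1 m).

Lemma coefCh L m k : (Ch L m)`_k = ('C(L, k) * 'C(m, k))%N%:R.
Proof. by rewrite coef_poly; case: ltnP => // h; rewrite bin_small. Qed.

Lemma Ch_m0 L : Ch L 0 = 1.
Proof.
apply/polyP => k; rewrite coefCh coef1 bin0n; case: k => [|k] //=.
by rewrite bin0 muln1.
by rewrite muln0.
Qed.

Lemma hockey L k : (\sum_(i < L) 'C(i, k) = 'C(L, k.+1))%N.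
Proof.
elim: L => [|L IH]; first by rewrite big_ord0 bin0n.
by rewrite big_ord_recr /= IH binS.
Qed.

Lemma Sc_rec L m : Sc L.+1 m = Sc L m + Ch L m.
Proof. by rewrite /Sc big_ord_recr. Qed.

Lemma ChS L m : Ch L m.+1 = Ch L m + 'X * Sc L m.
Proof.
apply/polyP => k; rewrite coefD coefXM !coefCh.
case: k => [|k] /=; first by rewrite !bin0 addr0.
rewrite /Sc coef_sum (eq_bigr (fun j : 'I_L => ('C(j, k) * 'C(m, k))%N%:R)); last by move=> j _; rewrite coefCh.
rewrite -natr_sum -natrD; congr (_%:R).
by rewrite -big_distrl /= hockey binS mulnDr addnC.
Qed.

Lemma Phi_m0 D : Phi D 0 = 1.
Proof. by rewrite /Phi !Ch_m0 !subrr !mulr0 add0r addr0. Qed.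


Lemma Phi_step D m : Phi D.+1 m.+1 = Phi D.+1 m + 'X * (2%:R * Ch D.+1 m + Sc D m + 'X * Ch D m).
Proof.
rewrite /Phi /= !ChS.
have e1 := Sc_rec D.+1 m; have e2 := Sc_rec D m.
rewrite e1 e2; ring.
Qed.

Lemma revsum_gen (f : nat -> {poly int}) k : forall h N, (N - h = k)%N ->
  \sum_(h <= l < N) f (N.-1 - l)%N = \sum_(j < k) f j.
Proof.
elim: k => [|k IH] h N e.
  by rewrite big_ord0 big_geq //; lia.
rewrite big_ltn; last lia.
rewrite (IH h.+1 N) ?big_ord_recr /=; last lia.
have -> : (N.-1 - h = k)%N by lia.
by rewrite addrC.
Qed.

Lemma revsum (f : nat -> {poly int}) h N :
  \sum_(h <= l < N) f (N.-1 - l)%N = \sum_(j < N - h) f j.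
Proof. exact: revsum_gen. Qed.

Section ESec.
Variable n : nat.
Definition E (h m : nat) : {poly int} :=
  if (n < h)%N then Ch (n.*2.+1 - h) m else Phi (n.*2.+1 - h) m.
Definition gl (m l : nat) : {poly int} := if l == n then Ch n.+1 m else E l.+1 m.

Lemma E_m0 h : E h 0 = 1.
Proof. by rewrite /E Ch_m0 Phi_m0; case: ifP. Qed.

Lemma sum_high_gen m h : (n < h)%N -> \sum_(h <= l < n.*2.+1) gl m l = Sc (n.*2.+1 - h) m.
Proof.
move=> nh.
rewrite (eq_big_nat _ _ (F2 := fun l => Ch (n.*2.+1.-1 - l) m)); last first.
  move=> l /andP[h1 h2]; rewrite /gl /E.
  have -> : (l == n) = false by apply/negbTE; rewrite neq_ltn; apply/orP; right; lia.
  rewrite ifT; last lia.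
  congr Ch; lia.
by rewrite (revsum (fun j => Ch j m) h n.*2.+1) /Sc.
Qed.

Lemma sum_high m : \sum_(n.+1 <= l < n.*2.+1) gl m l = Sc n m.
Proof.
rewrite (eq_big_nat _ _ (F2 := fun l => Ch (n.*2.+1.-1 - l) m)); last first.
  move=> l /andP[h1 h2]; rewrite /gl /E.
  have -> : (l == n) = false by apply/negbTE; rewrite neq_ltn h1 orbT.
  rewrite ifT; last lia.
  congr Ch; lia.
rewrite (revsum (fun j => Ch j m) n.+1 n.*2.+1) /Sc.
by have -> : (n.*2.+1 - n.+1 = n)%N by lia.
Qed.

Lemma key_id m k : (k <= n)%N ->
  \sum_(n - k <= l < n.*2.+1) gl m l + Ch n.+1 m + 'X * Ch n m =
  2%:R * Ch (n + k).+1 m + Sc (n + k) m + 'X * Ch (n + k) m.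
Proof.
elim: k => [|k IH] hk.
  rewrite subn0 addn0 big_ltn; last lia.
  rewrite sum_high /gl eqxx; ring.
rewrite big_ltn; last lia.
have -> : (n - k.+1).+1 = (n - k)%N by lia.
have e := IH (ltnW hk).
have -> : \sum_(n - k <= i < n.*2.+1) gl m i = 2%:R * Ch (n + k).+1 m + Sc (n + k) m + 'X * Ch (n + k) m - Ch n.+1 m - 'X * Ch n m.
  by rewrite -e; ring.
rewrite /gl ifF; last lia.
rewrite /E ifF; last lia.
have -> : (n.*2.+1 - (n - k.+1).+1 = (n + k).+1)%N by lia.
rewrite /Phi /= addnS Sc_rec; ring.
Qed.

Lemma U_id m h : (h <= n)%N ->
  Phi (n.*2.+1 - h) m.+1 = Phi (n.*2.+1 - h) m +
    'X * (\sum_(h <= l < n.*2.+1) gl m l + gl m n) + 'X^2 * E n.+1 m.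
Proof.
move=> hn.
have -> : h = (n - (n - h))%N by lia.
have -> : (n.*2.+1 - (n - (n - h)) = (n + (n - h)).+1)%N by lia.
rewrite Phi_step.
have e := key_id m (leq_subr h n).
have -> : \sum_(n - (n - h) <= l < n.*2.+1) gl m l = 2%:R * Ch (n + (n - h)).+1 m + Sc (n + (n - h)) m + 'X * Ch (n + (n - h)) m - Ch n.+1 m - 'X * Ch n m.
  by rewrite -e; ring.
rewrite /gl eqxx /E ifT; last lia.
have -> : (n.*2.+1 - n.+1 = n)%N by lia.
ring.
Qed.

End ESec.

Local Close Scope ring_scope.


Section Fam.
Variables (M n : nat).
Local Notation Q := ('I_(n.*2.+2)).
Local Notation leK := (Kn_le n).
Local Notation lv := (Kn_lvl n).

Definition UU (h : nat) : {set Q} := [set x | (h <= lv x)%N].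
Definition WW (x : Q) : {set Q} := [set y | (y != x) && (n <= lv y)%N].

Lemma down_gen (S : {set Q}) (y : Q) : lv y != n ->
  S :\: [set z | leK z y] = [set z in S | (lv y < lv z)%N].
Proof.
move=> ny; apply/setP => z; rewrite !inE /Kn_le andbC; congr (_ && _).
rewrite negb_or -leqNgt; apply/idP/idP.
  case/andP=> zy; rewrite leq_eqVlt => /orP [/eqP e|//].
  exfalso; move/eqP: ny; apply; rewrite e; exact: lv_eq (esym e) zy.
move=> lt; rewrite ltnW // andbT; apply/eqP => e; by rewrite e ltnn in lt.
Qed.

Lemma dU1 h (x : Q) : x \in UU h -> lv x != n -> UU h :\: [set z | leK z x] = UU (lv x).+1.
Proof.
move=> xU nx; rewrite down_gen //; apply/setP => z; rewrite !inE.
move: xU; rewrite inE => hx; apply/idP/idP => [/andP[]//|lt].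
by rewrite lt andbT; apply: leq_trans hx (ltnW lt).
Qed.

Lemma dUW h (x : Q) : (h <= n)%N -> lv x = n -> UU h :\: [set z | leK z x] = WW x.
Proof.
move=> hn ex; apply/setP => z; rewrite !inE /Kn_le ex negb_or -leqNgt.
apply/idP/idP => [/andP[/andP[-> ->] _]//|/andP[-> h2]].
by rewrite h2 (leq_trans hn h2).
Qed.

Lemma dU2 h : (h <= n)%N -> UU h :\: [set z | leK z (ka n) || leK z (kb n)] = UU n.+1.
Proof.
move=> hn; apply/setP => z; rewrite !inE /Kn_le lv_ka lv_kb !negb_or -leqNgt.
apply/idP/idP.
  case/andP=> /and3P [/andP[za h2] zb _] _.
  rewrite ltn_neqAle h2 andbT; apply/eqP => e.
  by have := lvn (esym e); rewrite (negbTE za) (negbTE zb).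
move=> lt; rewrite (ltnW lt) (leq_trans hn (ltnW lt)) !andbT.
by apply/andP; split; apply/eqP => e; move: lt; rewrite e ?lv_ka ?lv_kb ltnn.
Qed.

Lemma dW1 (x y : Q) : lv x = n -> y \in WW x -> lv y = n -> WW x :\: [set z | leK z y] = UU n.+1.
Proof.
move=> ex; rewrite inE => /andP[yx _] ey; apply/setP => z; rewrite !inE /Kn_le ey negb_or -leqNgt.
apply/idP/idP.
  case/andP=> /andP[zy h1] /andP[zx _].
  rewrite ltn_neqAle h1 andbT eq_sym; apply/eqP => e.
  by have := lvn_cases ex ey e (negbT (introF eqP (fun e => (negP yx) (introT eqP (esym e))))); rewrite (negbTE zx) (negbTE zy).
move=> lt; rewrite (ltnW lt) !andbT.
by apply/andP; split; apply/eqP => e; move: lt; rewrite e ?ex ?ey ltnn.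
Qed.

Lemma dW2 (x y : Q) : lv x = n -> y \in WW x -> lv y != n -> WW x :\: [set z | leK z y] = UU (lv y).+1.
Proof.
move=> ex yW ny; rewrite down_gen //; apply/setP => z; rewrite !inE.
move: yW; rewrite inE => /andP[_ hy]; apply/idP/idP => [/andP[]//|lt].
rewrite lt andbT (leq_trans hy (ltnW lt)) andbT; apply/eqP => e.
by move: lt; rewrite e ex ltnNge hy.
Qed.

Lemma ab_UU h : ((ka n \in UU h) && (kb n \in UU h)) = (h <= n)%N.
Proof. by rewrite !inE lv_ka lv_kb andbb. Qed.

Lemma ab_WW (x : Q) : lv x = n -> ((ka n \in WW x) && (kb n \in WW x)) = false.
Proof.
move=> ex; rewrite !inE lv_ka lv_kb leqnn !andbT.
by case/orP: (lvn ex) => /eqP ->; rewrite eqxx ?andbF.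
Qed.

Lemma shift_sum (R : Type) (idx : R) (op : Monoid.com_law idx) (F : nat -> R) a b :
  \big[op/idx]_(a.+1 <= i < b.+1) F i.-1 = \big[op/idx]_(a <= i < b) F i.
Proof.
elim: b => [|b IH]; first by rewrite !big_geq.
case: (leqP a b) => ab.
  by rewrite (big_nat_recr b.+1 a.+1) // (big_nat_recr b a) // IH.
by rewrite !big_geq.
Qed.

Local Open Scope ring_scope.

Lemma levelsum (G : nat -> {poly int}) :
  \sum_(y : Q) G (lv y) = \sum_(0 <= l < n.*2.+1) G l + G n.
Proof.
rewrite (eq_bigr (fun y : Q => (fun i => G (if (i <= n)%N then i else i.-1)) (nat_of_ord y))); last by move=> y _; rewrite lvE.
rewrite -(big_mkord xpredT (fun i => G (if (i <= n)%N then i else i.-1))).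
rewrite (big_cat_nat (n := n.+1)) //; last lia.
rewrite (eq_big_nat _ _ (F2 := G)); last by move=> i /andP[_ hi]; rewrite ifT.
rewrite (eq_big_nat _ _ (m := n.+1) (F2 := fun i => G i.-1)); last by move=> i /andP[hi _]; rewrite ifF //; lia.
rewrite shift_sum.
rewrite (big_ltn (m := n) (n := n.*2.+1)); last lia.
rewrite [X in _ = X + _](big_cat_nat (n := n.+1)) //; last lia.
rewrite /=; ring.
Qed.

Lemma sumU h (g : nat -> {poly int}) :
  \sum_(y in UU h) g (lv y) = \sum_(h <= l < n.*2.+1) g l + (if (h <= n)%N then g n else 0).
Proof.
rewrite big_mkcond /= (eq_bigr (fun y : Q => (fun l => if (h <= l)%N then g l else 0) (lv y))); last first.
  by move=> y _; rewrite inE.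
rewrite (levelsum (fun l => if (h <= l)%N then g l else 0)) /=; congr (_ + _).
rewrite [RHS]big_geq_mkord [RHS]big_mkcond [LHS]big_mkord /=. done.
Qed.

Lemma sumW (x : Q) (g : nat -> {poly int}) : lv x = n ->
  \sum_(y in WW x) g (lv y) = \sum_(n <= l < n.*2.+1) g l.
Proof.
move=> ex.
have := sumU n g; rewrite leqnn (bigD1 x) /=; last by rewrite inE ex.
rewrite ex => e.
have : g n + \sum_(y in WW x) g (lv y) = \sum_(n <= l < n.*2.+1) g l + g n.
  rewrite -e; congr (_ + _); apply: eq_bigl => y; rewrite !inE andbC //.
by rewrite addrC => /addIr.
Qed.

End Fam.

Section Main0. End Main0.


Section Main.
Variables (M n : nat).
Local Notation Q := ('I_(n.*2.+2)).
Local Notation lv := (Kn_lvl n).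
Local Open Scope ring_scope.

Lemma FF0 (S : {set Q}) : FF M 0 S = 1.
Proof.
rewrite /FF (big_pred1 set0) ?cards0 ?expr0 // => A /=.
apply/idP/eqP.
  case/andP=> _ /forall_inP h; apply/setP => p; rewrite inE; apply/negP => /h.
  by rewrite ltn0.
move=> ->; rewrite /okA; apply/andP; split; apply/forall_inP => p; by rewrite inE.
Qed.

Lemma closed m : (m <= M)%N ->
  (forall h, FF M m (UU n h) = E n h m) /\
  (forall x : Q, lv x = n -> FF M m (WW x) = Ch n.+1 m).
Proof.
elim: m => [_|m IH hm].
  by split => *; rewrite FF0 ?E_m0 ?Ch_m0.
have [IHU IHW] := IH (ltnW hm).
split.
- move=> h; rewrite FF_rec // ab_UU IHU.
  rewrite (eq_bigr (fun x => 'X * gl n m (lv x))); last first.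
    move=> x xU; case: (eqVneq (lv x) n) => ex.
      have hn : (h <= n)%N by move: xU; rewrite inE ex.
      by rewrite dUW // IHW // /gl ex eqxx.
    by rewrite dU1 // IHU /gl (negbTE ex).
  rewrite -big_distrr /= sumU.
  case: (leqP h n) => hn.
    have eh : forall k, E n h k = Phi (n.*2.+1 - h) k by move=> k; rewrite /E ifF //; lia.
    by rewrite dU2 // IHU !eh U_id.
  have eh : forall k, E n h k = Ch (n.*2.+1 - h) k by move=> k; rewrite /E ifT.
  by rewrite !eh ChS sum_high_gen // !addr0.
- move=> x ex; rewrite FF_rec // ab_WW // addr0 IHW //.
  rewrite (eq_bigr (fun y => 'X * E n (lv y).+1 m)); last first.
    move=> y yW; case: (eqVneq (lv y) n) => ey.
      by rewrite dW1 // IHU ey.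
    by rewrite dW2 // IHU.
  rewrite -big_distrr /= (@sumW n x (fun l => E n l.+1 m)) // big_ltn; last lia.
  rewrite (eq_big_nat _ _ (F2 := gl n m)); last first.
    by move=> l /andP[h1 _]; rewrite /gl ifF //; apply/negbTE; rewrite neq_ltn h1 orbT.
  rewrite sum_high ChS Sc_rec /E ifT //.
  have -> : (n.*2.+1 - n.+1 = n)%N by lia.
  by rewrite [Ch n m + _]addrC.
Qed.
End Main.

Local Open Scope ring_scope.

Lemma coefPhi D m k : (Phi D m)`_k =
  (('C(D.+1, k) * 'C(m, k))%N%:R - ('C(D, k) * 'C(m, k))%N%:R) *+ 2 + ('C(D.-1, k) * 'C(m, k))%N%:R
  + (if k is k'.+1 then ('C(D, k') * 'C(m, k'))%N%:R - ('C(D.-1, k') * 'C(m, k'))%N%:R else 0).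
Proof.
rewrite /Phi mulr_natl !coefD !coefN coefXM coefB !coefCh mulr2n.
by case: k => [|k] /=; ring.
Qed.

Lemma Phi_coef0 D m : (Phi D m)`_0 = 1.
Proof. by rewrite coefPhi !bin0 !muln1 subrr mul0rn add0r. Qed.

Lemma top_small N M k : (M.+1 < k)%N -> (Phi N.+1 M)`_k = 0.
Proof.
move=> hk; rewrite coefPhi; case: k hk => [//|k] hk.
rewrite !(bin_small (n := M)) ?muln0 ?subrr ?mul0rn ?addr0 //; lia.
Qed.

Lemma top_small_val N M : (0 < M)%N -> (M <= N.+1)%N -> (Phi N.+1 M)`_M.+1 = 'C(N, M.-1)%:R.
Proof.
move=> h0 h1; rewrite coefPhi (bin_small (ltnSn M)) !muln0 subrr /= ?mul0rn add0r binn !muln1.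
case: M h0 h1 => [//|M] _ h1 /=.
by rewrite binS natrD; ring.
Qed.

Lemma top_big N M k : (N.+2 <= M)%N -> (N.+2 < k)%N -> (Phi N.+1 M)`_k = 0.
Proof.
move=> hM hk; rewrite coefPhi; case: k hk => [//|k] hk /=.
rewrite !(bin_small (n := N.+2)) ?(bin_small (n := N.+1)) ?(bin_small (n := N)) ?mul0n ?subrr ?mul0rn ?addr0 //; lia.
Qed.

Lemma top_big_val N M : (N.+2 <= M)%N -> (Phi N.+1 M)`_N.+2 = (2 * 'C(M, N.+2) + 'C(M, N.+1))%N%:R.
Proof.
move=> hM; rewrite coefPhi /= !binn (bin_small (ltnSn N.+1)) (bin_small (ltnW (ltnSn N.+1))) (bin_small (ltnSn N)) !mul0n !mul1n.
rewrite !subr0 natrD natrM. ring.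
Qed.

Lemma size_at (p : {poly int}) d : p`_d != 0 -> (forall k, (d < k)%N -> p`_k = 0) -> size p = d.+1.
Proof.
move=> nz hi; apply/eqP; rewrite eqn_leq; apply/andP; split.
  by apply/leq_sizeP => j hj; apply: hi.
rewrite ltnNge; apply/negP => /leq_sizeP /(_ d (leqnn d)) e.
by rewrite e eqxx in nz.
Qed.

Definition Bz (L : nat) (z : int) : nat := if (z < 0)%R then 0%N else 'C(L, `|z|%N).

Lemma BzN L z : (z < 0)%R -> Bz L z = 0%N.
Proof. by rewrite /Bz => ->. Qed.

Lemma BzP L (k : nat) : Bz L k%:Z = 'C(L, k).
Proof. by []. Qed.

Lemma Bz_sym L z : Bz L (L%:Z - z) = Bz L z.
Proof.
rewrite /Bz.
case: ifP => h1; case: ifP => h2 //.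
- by rewrite bin_small //; lia.
- by rewrite bin_small //; lia.
- have [hL|hL] := boolP (z <= L%:Z)%R.
    have -> : (`|L%:Z - z| = L - `|z|)%N by lia.
    by rewrite bin_sub //; lia.
  lia.
Qed.

Lemma coefPal N k : (Phi N.+1 N.+1)`_k =
  (2 * Bz N.+1 (k%:Z - 1) * Bz N.+1 k%:Z + Bz N k%:Z * Bz N.+1 k%:Z
   + Bz N (k%:Z - 2) * Bz N.+1 (k%:Z - 1))%N%:R.
Proof.
rewrite coefPhi !BzP.
case: k => [|[|k]].
- rewrite !BzN //= !bin0 !muln0 !muln1 !add0n.
  by rewrite subrr mul0rn add0r addr0.
- have -> : ((1%N)%:Z - 1 = 0%:Z)%R by [].
  rewrite BzP !(BzN N) //= bin0 !muln1 addn0.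
  rewrite !bin1 bin0; nia.
- have -> : ((k.+2)%:Z - 1 = (k.+1)%:Z)%R by lia.
  have -> : ((k.+2)%:Z - 2 = k%:Z)%R by lia.
  rewrite !BzP /=.
  rewrite (binS N.+1 k.+1) (binS N k) !natrD !natrM; ring.
Qed.

Lemma pal_id N k : (k <= N.+2)%N ->
  (Phi N.+1 N.+1)`_k = (Phi N.+1 N.+1)`_(N.+2 - k).
Proof.
move=> hk; rewrite !coefPal.
have -> : (((N.+2 - k)%N)%:Z - 1 = N.+1%:Z - k%:Z)%R by lia.
have -> : (((N.+2 - k)%N)%:Z = N.+1%:Z - (k%:Z - 1))%R by lia.
have -> : ((N.+1%:Z - (k%:Z - 1)) - 2 = N%:Z - k%:Z)%R by lia.
rewrite !Bz_sym.
have -> : (N.+1%:Z - (k%:Z - 1) = N%:Z - (k%:Z - 2))%R by lia.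
rewrite !Bz_sym.
congr (_%:R); ring.
Qed.

Local Close Scope ring_scope.


Lemma card_ord_lt N c : #|[set x : 'I_N | x < c]| = minn c N.
Proof.
rewrite -sum1_card.
rewrite (eq_bigl (fun x : 'I_N => x < c)); last by move=> x; rewrite inE.
rewrite -(big_mkord (fun i => i < c) (fun _ => 1)).
elim: N => [|N IH]; first by rewrite big_geq //; lia.
rewrite big_mkcond big_nat_recr //= -big_mkcond IH.
case: ltnP => h; lia.
Qed.

Section Rank.
Variables (M n : nat).
Hypothesis hn : 0 < n.
Local Notation Q := ('I_(n.*2.+2)).
Local Notation T := ('I_M * 'I_(n.*2.+2))%type.
Local Notation le := (mKn_le M n).
Local Notation lv := (Kn_lvl n).

Definition cnt t := minn (if t < n then t.+1 else t.+2) n.*2.+2.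
Definition Lf s := if s < M then cnt s else cnt s - cnt (s - M).

Lemma card_lvle t : #|[set x : Q | lv x <= t]| = cnt t.
Proof.
rewrite /cnt -card_ord_lt; apply: eq_card => x; rewrite !inE lvE.
case: (leqP x n) => h1; case: (ltnP t n) => h2; lia.
Qed.

Lemma card_B s : #|[set x : Q | (lv x <= s) && (s < lv x + M)]| = Lf s.
Proof.
rewrite /Lf; case: ltnP => hs.
  rewrite -card_lvle; apply: eq_card => x; rewrite !inE.
  case: (lv x <= s) => //=; lia.
have -> : [set x : Q | (lv x <= s) && (s < lv x + M)] =
          [set x : Q | lv x <= s] :\: [set x : Q | lv x <= s - M].
  by apply/setP => x; rewrite !inE; case: (leqP (lv x) (s - M)) => h /=; lia.
rewrite cardsD -!card_lvle; congr (_ - _); apply: eq_card => x.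
by rewrite !inE; case: (leqP (lv x) (s - M)) => h /=; lia.
Qed.

Lemma card_level s : #|[set p : T | p.1 + lv p.2 == s]| = Lf s.
Proof.
rewrite -card_B -(card_in_imset (f := snd)); last first.
  move=> [i x] [j y]; rewrite !inE /= => /eqP e1 /eqP e2 exy; subst y.
  congr pair; apply: val_inj => /=; lia.
apply: eq_card => x; rewrite inE; apply/imsetP/idP.
  case=> [[i y]]; rewrite inE /= => /eqP e ->; have := ltn_ord i; lia.
case/andP=> h1 h2.
have hi : s - lv x < M by lia.
exists (Ordinal hi, x) => //; rewrite inE /=; apply/eqP; lia.
Qed.

Ltac dif := rewrite /Lf /cnt; repeat (case: ifP => ?); lia.

Lemma A1 : M = 1 -> (0 < Lf n) /\ forall s, s != n -> Lf s < Lf n.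
Proof. move=> hM; split; [|move=> s /eqP hs]; rewrite /Lf /cnt hM; repeat (case: ifP => ?); lia. Qed.

Lemma A2 : M = n.*2.+1 -> (0 < Lf n.*2) /\ forall s, s != n.*2 -> Lf s < Lf n.*2.
Proof. move=> hM; split; [|move=> s /eqP hs]; rewrite /Lf /cnt hM; repeat (case: ifP => ?); lia. Qed.

Lemma A3 : 0 < M -> M != 1 -> M != n.*2.+1 ->
  exists s1 s2, [/\ s1 != s2, Lf s1 = Lf s2 & forall s, Lf s <= Lf s1].
Proof.
move=> h0 /eqP h1 /eqP h2.
case: (leqP M n.*2) => hM.
  exists (maxn M.-1 n), (maxn M.-1 n).+1; split.
  - by rewrite neq_ltn ltnSn.
  - dif.
  - move=> s; dif.
exists n.*2, n.*2.+1; split.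
- by rewrite neq_ltn ltnSn.
- dif.
- move=> s; dif.
Qed.
End Rank.


Section Rank2.
Variables (M n : nat).
Hypothesis hn : 0 < n.
Local Notation Q := ('I_(n.*2.+2)).
Local Notation T := ('I_M * 'I_(n.*2.+2))%type.
Local Notation le := (mKn_le M n).
Local Notation lv := (Kn_lvl n).

Definition r0 (p : T) : nat := (p.1 + lv p.2).+1.

Lemma lv_surj L : L < n.*2.+1 -> exists w : Q, lv w = L.
Proof.
move=> hL; have h : (if L <= n then L else L.+1) < n.*2.+2 by case: (leqP L n); lia.
by exists (Ordinal h); rewrite lvE /=; case: (leqP L n) => h1 /=; case: leqP; lia.
Qed.

Lemma leE (x y : T) : le x y = (x.1 <= y.1) && ((x.2 == y.2) || (lv x.2 < lv y.2)).
Proof. by []. Qed.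

Lemma neqE (x y : T) : (x != y) = (x.1 != y.1) || (x.2 != y.2).
Proof. by case: x y => [i a] [j b]; rewrite xpair_eqE negb_and. Qed.

Lemma r0_lt (x y : T) : le x y -> x != y -> r0 x < r0 y.
Proof.
rewrite leE neqE /r0 => /andP[h1 /orP[/eqP e|h2]] h3.
  by move: h3; rewrite e eqxx orbF -val_eqE /= => h3; rewrite ltnS; lia.
rewrite ltnS; lia.
Qed.

Lemma covers_of (x y : T) : le x y -> x != y -> r0 y = (r0 x).+1 -> covers le x y.
Proof.
move=> l ne e; rewrite /covers /plt l ne /=; apply/forallP => z; apply/negP => /andP[/andP[l1 n1] /andP[l2 n2]].
have := r0_lt l1 n1; have := r0_lt l2 n2; lia.
Qed.

Lemma r0_rank : rank_function le r0.
Proof.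
split.
  move=> x /forallP mx; rewrite /r0.
  case: (posnP x.1) => h1.
    case: (posnP (lv x.2)) => h2; first by rewrite h1 h2.
    have [w hw] : exists w : Q, lv w = (lv x.2).-1 by apply: lv_surj; have := lv_lt x.2; lia.
    have := mx (x.1, w); rewrite leE /= leqnn hw /=.
    have -> : ((lv x.2).-1 < lv x.2) by lia.
    rewrite orbT /= => /eqP e; have e2 : w = x.2 by rewrite -e.
    by move: hw; rewrite e2; lia.
  have hi : x.1.-1 < M by have := ltn_ord x.1; lia.
  have := mx (Ordinal hi, x.2); rewrite leE /= eqxx /=.
  have -> : x.1.-1 <= x.1 by lia.
  move=> /implyP /(_ isT) /eqP e; have /= e1 := congr1 (fun p : T => nat_of_ord p.1) e.
  by move: e1 h1; case: (nat_of_ord x.1) => // k; lia.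
move=> x y /andP[/andP[l ne] /forallP nz]; apply/eqP; apply: contraT => hne.
have lt := r0_lt l ne.
have hge : r0 x + 2 <= r0 y by move: hne lt; rewrite /r0; lia.
move: l ne hge nz; clear hne lt; case: x => [i a]; case: y => [j b] /=.
rewrite leE neqE /r0 /= => /andP[hij hab] ne hge nz.
case: (eqVneq a b) => [eab|nab].
  subst b; rewrite eqxx orbF in ne.
  have hi : i.+1 < M by have := ltn_ord j; lia.
  have := nz (Ordinal hi, a); rewrite /plt !leE !neqE /= eqxx /= !orbF.
  rewrite -!val_eqE /=; case/negP; rewrite !andbT; apply/and3P; split; lia.
rewrite /= (negbTE nab) /= in hab.
case: (ltnP i j) => hij2.
  have := nz (i, b); rewrite /plt !leE !neqE /= !eqxx /= orbF hab (negbTE nab) /= andbT.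
  rewrite -!val_eqE /=; case/negP; rewrite !andbT; apply/and3P; split; lia.
have eij : i = j by apply: ord_inj; lia.
subst j.
have [w hw] : exists w : Q, lv w = (lv a).+1 by apply: lv_surj; have := lv_lt b; lia.
have := nz (i, w); rewrite /plt !leE !neqE /= !eqxx /= leqnn /=.
have nwa : w != a by apply/eqP => e; move: hw; rewrite e; lia.
have nwb : w != b by apply/eqP => e; move: hw hge; rewrite e; lia.
have hwb : lv w < lv b by move: hge; rewrite hw; lia.
case/negP; by rewrite hwb orbT nwb hw ltnSn orbT /= (eq_sym a w) nwa.
Qed.

Lemma rank_unique r : rank_function le r -> forall p, r p = r0 p.
Proof.
case=> hmin hcov.
suff H : forall s (p : T), p.1 + lv p.2 = s -> r p = r0 p by move=> p; exact: H _ p erefl.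
elim=> [|s IH] p e.
  rewrite /r0 e; apply: hmin; apply/forallP => y; apply/implyP; rewrite leE => /andP[h1 h2].
  apply/eqP; apply: injective_projections => /=; first by apply: ord_inj; lia.
  by case/orP: h2 => [/eqP //|]; lia.
case: (posnP p.1) => h1.
  have [w hw] : exists w : Q, lv w = (lv p.2).-1 by apply: lv_surj; have := lv_lt p.2; lia.
  have c : covers le (p.1, w) p.
    apply: covers_of; rewrite ?leE ?neqE /= ?leqnn ?eqxx /r0 /=.
    - by apply/orP; right; rewrite hw; lia.
    - by apply/eqP => ew; move: hw; rewrite ew; lia.
    - by rewrite hw; lia.
  by rewrite (hcov _ _ c) IH /r0 /= ?hw; lia.
have hi : p.1.-1 < M by have := ltn_ord p.1; lia.
have c : covers le (Ordinal hi, p.2) p.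
  apply: covers_of; rewrite ?leE ?neqE /= ?eqxx ?orbT /r0 /=.
  - by apply/andP; split => //; lia.
  - by apply/orP; left; apply/eqP => ei; have /= := congr1 (@nat_of_ord M) ei; lia.
  - lia.
by rewrite (hcov _ _ c) IH /r0 /=; lia.
Qed.

Lemma level_card k : #|rank_level r0 k| = if k is s.+1 then Lf M n s else 0.
Proof.
case: k => [|s].
  apply/eqP; rewrite cards_eq0; apply/eqP/setP => p; by rewrite !inE.
rewrite -(card_level M hn s); apply: eq_card => p; by rewrite !inE /r0.
Qed.

End Rank2.

Import Num.Theory.

Lemma apoly M n : antichain_poly (mKn_le M n) = Phi n.*2.+1 M.
Proof.
have [hU _] := closed n (leqnn M).
have := hU 0; rewrite /E ltn0 subn0 => <-.
rewrite /antichain_poly /FF; apply: eq_bigl => A; rewrite /okA.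
case: (antichain _ A) => //=; apply/esym/forall_inP => q _; by rewrite ltn_ord inE.
Qed.

Lemma bin_eq1 N j : j <= N -> ('C(N, j) == 1) = (j == 0) || (j == N).
Proof.
move=> hj; case: (posnP j) => [->|j0]; first by rewrite bin0.
case: (eqVneq j N) => [->|jN]; first by rewrite binn eqxx orbT.
rewrite orbF.
case: N hj jN => [|N] hj jN; first lia.
case: j j0 hj jN => [//|j] _ hj jN.
rewrite binS; have h1 := bin_gt0 N j.+1; have h2 := bin_gt0 N j.
have : j.+1 <= N by lia.
rewrite -h1 => h1'; have : j <= N by lia.
rewrite -h2 => h2'; lia.
Qed.

Section Fin.
Local Open Scope ring_scope.

Lemma natr_eq1 (k : nat) : ((k%:R : int) == 1) = (k == 1)%N.
Proof. by rewrite -(eqr_nat int k 1). Qed.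

Lemma monic_iff m n : (0 < m)%N ->
  (m = 1%N \/ m = n.*2.+1) <-> Phi n.*2.+1 m \is monic.
Proof.
move=> hm; rewrite monicE lead_coefE.
case: (leqP m n.*2.+1) => hmN.
  have hs : size (Phi n.*2.+1 m) = m.+2.
    apply: size_at; first by rewrite top_small_val // pnatr_eq0 -lt0n bin_gt0; lia.
    by move=> k hk; rewrite top_small.
  rewrite hs /= top_small_val // natr_eq1 bin_eq1; last lia.
  split; [case=> ->; lia | move/orP => [] /eqP h; lia].
have hs : size (Phi n.*2.+1 m) = n.*2.+3.
  apply: size_at; first by rewrite top_big_val // pnatr_eq0; have := bin_gt0 m n.*2.+1; lia.
  by move=> k hk; apply: top_big.
rewrite hs /= top_big_val // natr_eq1.
split; first lia.
have := bin_gt0 m n.*2.+1; have := bin_gt0 m n.*2.+2; lia.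
Qed.

Lemma pal_iff m n : (0 < m)%N -> (0 < n)%N ->
  (m = 1%N \/ m = n.*2.+1) <-> palindromic (Phi n.*2.+1 m).
Proof.
move=> hm hn; split.
  case=> hc.
    subst m.
    have hs : size (Phi n.*2.+1 1) = 3%N.
      apply: size_at; first by rewrite top_small_val // bin0 oner_eq0.
      by move=> k hk; rewrite top_small.
    rewrite /palindromic hs /= => k hk.
    case: k hk => [|[|[|k]]] hk //=.
      by rewrite Phi_coef0 top_small_val // bin0.
    by rewrite Phi_coef0 top_small_val // bin0.
  subst m.
  have hs : size (Phi n.*2.+1 n.*2.+1) = n.*2.+3.
    apply: size_at; first by rewrite top_small_val // binn oner_eq0.
    by move=> k hk; rewrite top_small.
  rewrite /palindromic hs /= => k hk; exact: pal_id.
move=> hp; apply/(monic_iff n hm); rewrite monicE lead_coefE.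
have := hp 0%N (leq0n _); rewrite subn0 => <-.
by rewrite Phi_coef0.
Qed.

End Fin.

Lemma uniq_iff m n (hm : (0 < m)%N) (hn : (0 < n)%N) :
  unique_max_rank_level (mKn_le m n) <-> (m = 1%N \/ m = n.*2.+1).
Proof.
split.
  case=> r [rf [k hk]].
  have eqr := rank_unique hn rf.
  have lev : forall j, #|rank_level r j| = #|rank_level (@r0 m n) j|.
    by move=> j; apply: eq_card => p; rewrite !inE eqr.
  case: (eqVneq m 1%N) => [->|h1]; first by left.
  case: (eqVneq m n.*2.+1) => [->|h2]; first by right.
  exfalso.
  have [s1 [s2 [ne eq bd]]] := A3 hn hm h1 h2.
  have ck : (#|rank_level r k| <= Lf m n s1)%N.
    by rewrite lev level_card //; case: k {hk} => [|s] //.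
  have cj : forall s, (s == s1) || (s == s2) -> #|rank_level r s.+1| = Lf m n s1.
    by move=> s /orP [] /eqP ->; rewrite lev level_card.
  case: (eqVneq k s1.+1) => [ek|nk].
    have := hk s2.+1; rewrite ek eqSS eq_sym ne => /(_ isT).
    rewrite cj ?eqxx ?orbT // -ek; lia.
  have := hk s1.+1; rewrite eq_sym nk => /(_ isT).
  rewrite cj ?eqxx //; lia.
case=> hc; exists (@r0 m n); (split; first exact: r0_rank).
  exists n.+1 => j hj; rewrite !level_card //.
  have [a1 a2] := A1 hn hc.
  by case: j hj => [|s] // /= /a2.
exists n.*2.+1 => j hj; rewrite !level_card //.
have [a1 a2] := A2 hn hc.
by case: j hj => [|s] // /= /a2.
Qed.

Unset Implicit Arguments.

Theorem theorem7p2 (m n : nat) (hm : (0 < m)%N) (hn : (0 < n)%N) :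
  let P := mKn_le m n in
  (unique_max_rank_level P <-> (m = 1%N \/ m = n.*2.+1)) /\
  ((m = 1%N \/ m = n.*2.+1) <-> antichain_poly P \is monic) /\
  ((m = 1%N \/ m = n.*2.+1) <-> palindromic (antichain_poly P)).
Proof.
move=> P; rewrite /P apoly; split; first exact: uniq_iff.
split; [exact: monic_iff | exact: pal_iff].
Qed.
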